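(* Let $F\in\mathbb{Q}[x,y]$ be such that $F(\mathbb{R}\times\mathbb{R})=\mathbb{R}$ and $F(\mathbb{Z}\times\mathbb{Z})\supseteq\mathbb{N}$, and suppose the curve $C=\{F(x,y)=0\}\subset\mathbb{A}^2$ is smooth and isomorphic over $\overline{\mathbb{Q}}$ to $\mathbb{A}^1_*$. Let $\phi:\mathbb{P}^1\setminus\{a,b\}\to C$ be an isomorphism. Then the two points $a,b$ (the two places at infinity of $C$) are defined over $\mathbb{R}$.
   Context: $\mathbb{N}$ denotes the set of non-negative integers; $\mathbb{A}^1_*=\mathbb{A}^1\setminus\{0\}$. *)

(* Defs.v *)
(* R : realType (mathcomp-reals), complex numbers R[i]
   from mathcomp-real-closed.  Bivariate polynomials are {poly {poly K}}:
   the outer variable is y, the inner one is x. *)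
From HB Require Import structures.
From mathcomp Require Import all_boot all_order all_algebra.
From mathcomp Require Import reals complex.
Set Implicit Arguments. Unset Strict Implicit. Unset Printing Implicit Defensive.
Import Order.TTheory GRing.Theory Num.Theory.
Local Open Scope ring_scope.

Definition ev2 {K : comNzRingType} (F : {poly {poly K}}) (x y : K) : K :=
  (map_poly (fun p : {poly K} => p.[x]) F).[y].

Definition dX {K : comNzRingType} (F : {poly {poly K}}) : {poly {poly K}} :=
  map_poly (@deriv K) F.
Definition dY {K : comNzRingType} (F : {poly {poly K}}) : {poly {poly K}} :=
  deriv F.

Definition map2 {K L : comNzRingType} (f : K -> L) (F : {poly {poly K}})
  : {poly {poly L}} := map_poly (map_poly f) F.

Definition hom {K : comNzRingType} (d : nat) (p : {poly K}) (s t : K) : K :=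
  \sum_(i < d.+1) p`_i * s ^+ i * t ^+ (d - i).

Section Geometry.
Variable R : realType.
Local Notation C := (R[i]).

Definition FC (F : {poly {poly rat}}) : {poly {poly C}} := map2 ratr F.
Definition FR (F : {poly {poly rat}}) : {poly {poly R}} := map2 ratr F.

Definition onCurve (F : {poly {poly rat}}) (c : C * C) : Prop :=
  ev2 (FC F) c.1 c.2 = 0.

Definition smooth_curve (F : {poly {poly rat}}) : Prop :=
  forall c : C * C, onCurve F c ->
    ev2 (dX (FC F)) c.1 c.2 != 0 \/ ev2 (dY (FC F)) c.1 c.2 != 0.

Definition is_algebraic (z : C) : Prop :=
  exists p : {poly rat}, p != 0 /\ root (map_poly ratr p) z.

(* {F = 0} is isomorphic over Qbar to A^1_* : a morphism
   t |-> (P1(t)/t^m, P2(t)/t^m) with Qbar-coefficients from A^1_* to the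
   curve, with an inverse morphism given by a regular function G on the
   curve which does not vanish on it. *)
Definition iso_Gm_over_Qbar (F : {poly {poly rat}}) : Prop :=
  exists (P1 P2 : {poly C}) (m : nat) (G : {poly {poly C}}),
    (forall i, is_algebraic P1`_i /\ is_algebraic P2`_i) /\
    let phi t := (P1.[t] / t ^+ m, P2.[t] / t ^+ m) in
    (forall t : C, t != 0 -> onCurve F (phi t)) /\
    (forall t : C, t != 0 -> ev2 G (phi t).1 (phi t).2 = t) /\
    (forall c, onCurve F c ->
       ev2 G c.1 c.2 != 0 /\ phi (ev2 G c.1 c.2) = c).

(* points of P^1(C) are given by nonzero pairs (s,t) = [s:t] *)
Definition nonzero2 (v : C * C) : Prop := v.1 != 0 \/ v.2 != 0.
Definition projeq (u v : C * C) : Prop := u.1 * v.2 = u.2 * v.1.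

Definition real_point (a : C * C) : Prop :=
  exists l : C, l != 0 /\
    exists u v : R, l * a.1 = u%:C%C /\ l * a.2 = v%:C%C.

Definition P1minus2 (a b v : C * C) : Prop :=
  nonzero2 v /\ ~ projeq v a /\ ~ projeq v b.

(* phi : P^1 \ {a,b} -> {F = 0} is an isomorphism defined over R:
   phi [s:t] = (A1(s,t)/Q(s,t), A2(s,t)/Q(s,t)) with A1, A2, Q real binary
   forms of the same degree d, Q not vanishing on P^1 \ {a,b}; the inverse
   morphism from the curve to P^1 \ {a,b} is given locally by a finite
   family of pairs of polynomials [G_i : H_i] that cover the curve and agree
   on overlaps. *)
Definition iso_P1minus2_over_R (F : {poly {poly rat}}) (a b : C * C) : Prop :=
  exists (d : nat) (A1 A2 Q : {poly R}),
    let h p (v : C * C) := hom d (map_poly (real_complex R) p) v.1 v.2 in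
    let phi v := (h A1 v / h Q v, h A2 v / h Q v) in
    (forall v, P1minus2 a b v -> h Q v != 0 /\ onCurve F (phi v)) /\
    exists Gs : seq ({poly {poly C}} * {poly {poly C}}),
      let psi (g : {poly {poly C}} * {poly {poly C}}) (c : C * C) :=
        (ev2 g.1 c.1 c.2, ev2 g.2 c.1 c.2) in
      (forall c, onCurve F c -> exists2 g, g \in Gs & nonzero2 (psi g c)) /\
      (forall c, onCurve F c -> forall g g', g \in Gs -> g' \in Gs ->
          projeq (psi g c) (psi g' c)) /\
      (forall c, onCurve F c -> forall g, g \in Gs -> nonzero2 (psi g c) ->
          P1minus2 a b (psi g c)) /\
      (forall v, P1minus2 a b v -> forall g, g \in Gs ->
          nonzero2 (psi g (phi v)) -> projeq (psi g (phi v)) v) /\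
      (forall c, onCurve F c -> forall g, g \in Gs -> nonzero2 (psi g c) ->
          phi (psi g c) = c).

End Geometry.

(* Main.v *)
Require Import Defs.
From HB Require Import structures.
From mathcomp Require Import all_boot all_order all_algebra.
From mathcomp Require Import reals complex.
From mathcomp Require boolp classical_sets topology normedtype derive.
From mathcomp Require Import ring lra zify.
From Stdlib Require Import Classical.
Import Order.TTheory GRing.Theory Num.Theory.
Local Open Scope ring_scope.
Set Implicit Arguments. Unset Strict Implicit. Unset Printing Implicit Defensive.

Lemma hom_rmorph (K L : comNzRingType) (f : {rmorphism K -> L}) d p s t :
  f (Defs.hom d p s t) = Defs.hom d (map_poly f p) (f s) (f t).
Proof.
rewrite /Defs.hom rmorph_sum; apply: eq_bigr => i _.
by rewrite !rmorphM !rmorphXn coef_map.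
Qed.

Lemma hom_scale (K : comNzRingType) d (p : {poly K}) l s t :
  Defs.hom d p (l * s) (l * t) = l ^+ d * Defs.hom d p s t.
Proof.
rewrite /Defs.hom mulr_sumr; apply: eq_bigr => i _.
rewrite !exprMn. have hi : (i + (d - i) = d)%N by rewrite subnKC // -ltnS.
have -> : l ^+ d = l ^+ i * l ^+ (d - i) by rewrite -exprD hi.
ring.
Qed.

Lemma ev2_rmorph (K L : comNzRingType) (f : {rmorphism K -> L}) (G : {poly {poly K}}) x y :
  f (ev2 G x y) = ev2 (map2 f G) (f x) (f y).
Proof.
rewrite /ev2 /map2 -horner_map /=. congr (_.[_]).
rewrite -map_poly_comp -map_poly_comp_id0 ?horner0 //. apply: eq_map_poly => p /=. by rewrite horner_map.
Qed.

Section Real.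
Variable R : realType.
Local Notation C := (R[i]).

Definition vconj (v : C * C) := (v.1^*%C, v.2^*%C).

Lemma map2_conj (F : {poly {poly rat}}) : map2 conjc (FC R F) = FC R F.
Proof.
rewrite /map2 /FC /map2 -map_poly_comp; apply: eq_map_poly => p /=.
rewrite -map_poly_comp; apply: eq_map_poly => q /=. by rewrite fmorph_rat.
Qed.

Lemma map2_realC (F : {poly {poly rat}}) : map2 (real_complex R) (FR R F) = FC R F.
Proof.
rewrite /map2 /FC /FR /map2 -map_poly_comp; apply: eq_map_poly => p /=.
rewrite -map_poly_comp; apply: eq_map_poly => q /=. by rewrite fmorph_rat.
Qed.

Lemma onCurve_conj F c : onCurve F c -> onCurve F (vconj c).
Proof.
rewrite /onCurve /vconj /= => H.
by rewrite -map2_conj -ev2_rmorph H rmorph0.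
Qed.

Lemma onCurve_real F (x y : R) : onCurve F (x%:C, y%:C)%C <-> ev2 (FR R F) x y = 0.
Proof.
rewrite /onCurve /= -map2_realC -ev2_rmorph; split.
  by case.
by move=> ->.
Qed.

Lemma selfconj_real (z : C) : z^*%C = z -> exists u : R, z = u%:C%C.
Proof.
case: z => x y /= [] H; exists x.
have -> : y = 0 by lra.
by [].
Qed.

Lemma real_of_selfconj w : nonzero2 w -> projeq w (vconj w) -> real_point w.
Proof.
case: w => [w1 w2]; rewrite /nonzero2 /projeq /real_point /= => nz pe.
have sc z : exists u : R, z^*%C * z = u%:C%C.
  by apply: selfconj_real; rewrite rmorphM /= conjcK mulrC.
case: (eqVneq w1 0) => [w10|w1n0].
- have w2n : w2 != 0 by case: nz => //; rewrite w10 eqxx.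
  exists w2^*%C; split; first by rewrite conjc_eq0.
  have [u hu] := sc w2. exists 0, u; split => //. by rewrite w10 mulr0.
- exists w1^*%C; split; first by rewrite conjc_eq0.
  have [u hu] := sc w1. 
  have [v hv] : exists v : R, w1^*%C * w2 = v%:C%C.
    apply: selfconj_real. by rewrite rmorphM /= conjcK pe mulrC.
  by exists u, v.
Qed.

Lemma projeq_sym (u v : C * C) : projeq u v -> projeq v u.
Proof. by rewrite /projeq mulrC => ->; rewrite mulrC. Qed.

Lemma projeq_trans (u v w : C * C) : nonzero2 v -> projeq u v -> projeq v w -> projeq u w.
Proof.
rewrite /projeq /nonzero2 => nz e1 e2; apply/eqP; rewrite -subr_eq0; apply/eqP.
have h1 : v.1 * (u.1 * w.2 - u.2 * w.1) = 0.
  have -> : v.1 * (u.1 * w.2 - u.2 * w.1) = u.1 * (v.1 * w.2) - w.1 * (u.2 * v.1) by ring.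
  rewrite e2 -e1; ring.
have h2 : v.2 * (u.1 * w.2 - u.2 * w.1) = 0.
  have -> : v.2 * (u.1 * w.2 - u.2 * w.1) = w.2 * (u.1 * v.2) - u.2 * (v.2 * w.1) by ring.
  rewrite -e2 e1; ring.
case: nz => nz.
  by move: h1 => /eqP; rewrite mulf_eq0 (negbTE nz) /= => /eqP.
by move: h2 => /eqP; rewrite mulf_eq0 (negbTE nz) /= => /eqP.
Qed.

Lemma projeq_conj u v : projeq u v -> projeq (vconj u) (vconj v).
Proof. by rewrite /projeq /vconj /= -!rmorphM => ->. Qed.

Lemma nonzero2_conj u : nonzero2 u -> nonzero2 (vconj u).
Proof. by rewrite /nonzero2 /vconj /= !conjc_eq0. Qed.

Lemma projeq0 (u v : C * C) : ~ nonzero2 u -> projeq u v.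
Proof.
rewrite /nonzero2 /projeq; case: (eqVneq u.1 0) => [->|h]; last by move=> H; case: H; left.
case: (eqVneq u.2 0) => [->|h]; last by move=> H; case: H; right.
by rewrite !mul0r.
Qed.

End Real.


Definition Hm (K L : comNzRingType) (f : K -> L) (n : nat) (G : {poly {poly K}}) (u v q : L) : L :=
  \sum_(j < n) \sum_(i < n) f (G`_j`_i) * u ^+ i * v ^+ j * q ^+ (n + n - i - j).

Lemma Hm_rmorph (K L L' : comNzRingType) (f : K -> L) (phi : {rmorphism L -> L'}) n G u v q :
  phi (Hm f n G u v q) = Hm (phi \o f) n G (phi u) (phi v) (phi q).
Proof.
rewrite /Hm rmorph_sum; apply: eq_bigr => j _; rewrite rmorph_sum; apply: eq_bigr => i _.
by rewrite !rmorphM !rmorphXn.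
Qed.

Lemma Hm_ext (K L : comNzRingType) (f g : K -> L) n G u v q :
  f =1 g -> Hm f n G u v q = Hm g n G u v q.
Proof. by move=> fg; rewrite /Hm; apply: eq_bigr => j _; apply: eq_bigr => i _; rewrite fg. Qed.

Definition msz (K : nzSemiRingType) (G : {poly {poly K}}) := (\max_(j < size G) size (nth 0%R G j))%N.

Lemma msz_ge (K : nzSemiRingType) (G : {poly {poly K}}) j : (size (nth 0%R G j) <= msz G)%N.
Proof.
case: (ltnP j (size G)) => hj.
  rewrite /msz; exact: (@leq_bigmax _ (fun j : 'I_(size G) => size (nth 0%R G j)) (Ordinal hj)).
by rewrite nth_default // size_poly0.
Qed.

Lemma Hm_ev2 (K : fieldType) n (G : {poly {poly K}}) (u v q : K) : q != 0 ->
  (size G <= n)%N -> (forall j, size (nth 0%R G j) <= n)%N ->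
  ev2 G (u / q) (v / q) * q ^+ (n + n) = Hm id n G u v q.
Proof.
move=> q0 hG hGj.
have hm : (size (map_poly (fun p : {poly K} => p.[u / q]) G) <= n)%N.
  apply/leq_sizeP => j hj; rewrite coef_map_id0 ?horner0 //.
  by rewrite nth_default ?horner0 // (leq_trans hG hj).
rewrite /ev2 (horner_coef_wide _ hm) mulr_suml; apply: eq_bigr => j _.
rewrite coef_map_id0 ?horner0 // (horner_coef_wide _ (hGj j)) !mulr_suml.
apply: eq_bigr => i _ /=.
have hij : (n + n = i + j + (n + n - i - j))%N.
  rewrite -subnDA subnKC //. by rewrite leq_add // ltnW.
rewrite {1}hij !exprD !expr_div_n.
have qi : q ^+ i != 0 by rewrite expf_neq0.
have qj : q ^+ j != 0 by rewrite expf_neq0.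
move: (q ^+ i) qi (q ^+ j) qj (q ^+ (n + n - i - j)) => a ha b hb c.
field; by rewrite ha hb.
Qed.

Section Cx.
Variable R : realType.
Local Notation C := (R[i]).

Lemma poly_zero_all (p : {poly C}) : (forall e, p.[e] = 0) -> p = 0.
Proof.
move=> H; apply/eqP; apply/negP => /negP p0.
have H1 : all (root p) [seq (i%:R : C) | i <- iota 0 (size p)].
  by apply/allP => x /mapP [i _ ->]; rewrite /root H.
have H2 : uniq [seq (i%:R : C) | i <- iota 0 (size p)].
  rewrite map_inj_uniq ?iota_uniq // => i j /eqP; rewrite eqr_nat => /eqP //.
have := max_poly_roots p0 H1 H2.
by rewrite size_map size_iota ltnn.
Qed.

Lemma rat_cont (x y q w1 w2 : {poly C}) (G1 G2 : {poly {poly C}}) (S : seq C) :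
  q.[0] != 0 ->
  (forall e, e \notin S -> q.[e] != 0 ->
     ev2 G1 (x.[e] / q.[e]) (y.[e] / q.[e]) * w1.[e] +
     ev2 G2 (x.[e] / q.[e]) (y.[e] / q.[e]) * w2.[e] = 0) ->
  ev2 G1 (x.[0] / q.[0]) (y.[0] / q.[0]) * w1.[0] +
  ev2 G2 (x.[0] / q.[0]) (y.[0] / q.[0]) * w2.[0] = 0.
Proof.
move=> q00 H.
set n := (size G1 + size G2 + msz G1 + msz G2)%N.
have s1 : (size G1 <= n)%N by rewrite /n; lia.
have s2 : (size G2 <= n)%N by rewrite /n; lia.
have s1j j : (size (nth 0%R G1 j) <= n)%N.
  apply: leq_trans (msz_ge G1 j) _; rewrite /n; lia.
have s2j j : (size (nth 0%R G2 j) <= n)%N.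
  apply: leq_trans (msz_ge G2 j) _; rewrite /n; lia.
set T := Hm polyC n G1 x y q * w1 + Hm polyC n G2 x y q * w2.
have Te e : q.[e] != 0 -> T.[e] = q.[e] ^+ (n + n) *
     (ev2 G1 (x.[e] / q.[e]) (y.[e] / q.[e]) * w1.[e] +
      ev2 G2 (x.[e] / q.[e]) (y.[e] / q.[e]) * w2.[e]).
  move=> qe.
  have ev : T.[e] = horner_eval e T by [].
  rewrite ev /T rmorphD !rmorphM !Hm_rmorph.
  rewrite (@Hm_ext _ _ _ id); last by move=> c /=; rewrite /horner_eval hornerC.
  rewrite [Hm _ _ G2 _ _ _](@Hm_ext _ _ _ id); last by move=> c /=; rewrite /horner_eval hornerC.
  have E1 := @Hm_ev2 _ n G1 x.[e] y.[e] q.[e] qe s1 s1j.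
  have E2 := @Hm_ev2 _ n G2 x.[e] y.[e] q.[e] qe s2 s2j.
  rewrite /= /horner_eval -E1 -E2.
  move: (ev2 G1 _ _) (ev2 G2 _ _) (q.[e] ^+ (n + n)) (w1.[e]) (w2.[e]) => A B Q' W1 W2.
  ring.
have qn0 : q != 0 by apply: contraNneq q00 => ->; rewrite horner0.
set P := T * q * \prod_(s <- S) ('X - s%:P).
have P0 : P = 0.
  apply: poly_zero_all => e.
  rewrite /P !hornerM.
  case: (boolP (e \in S)) => eS.
    have r : root (\prod_(s <- S) ('X - s%:P)) e by rewrite root_prod_XsubC.
    by rewrite (eqP r) mulr0.
  case: (eqVneq q.[e] 0) => qe; first by rewrite qe mulr0 mul0r.
  by rewrite Te // H // !mulr0 !mul0r.
have T0 : T = 0.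
  move: P0 => /eqP; rewrite /P !mulf_eq0 (negbTE qn0) orbF.
  rewrite (negbTE (monic_neq0 (monic_prod_XsubC _ _ _))) orbF.
  by move/eqP.
have := Te 0 q00; rewrite T0 horner0 => /esym /eqP.
rewrite mulf_eq0 expf_eq0 (negbTE q00) andbF /=.
by move/eqP.
Qed.

End Cx.


Section A.
Variable R : realType.
Local Notation C := (R[i]).

Definition hh d (p : {poly R}) (v : C * C) := Defs.hom d (map_poly (real_complex R) p) v.1 v.2.
Definition phiv d A1 A2 Q (v : C * C) := (hh d A1 v / hh d Q v, hh d A2 v / hh d Q v).
Definition psi (g : {poly {poly C}} * {poly {poly C}}) (c : C * C) :=
  (ev2 g.1 c.1 c.2, ev2 g.2 c.1 c.2).

Definition isoC F (a b : C * C) d A1 A2 Q (Gs : seq ({poly {poly C}} * {poly {poly C}})) : Prop :=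
 (forall v, P1minus2 a b v -> hh d Q v != 0 /\ onCurve F (phiv d A1 A2 Q v)) /\
 (forall c, onCurve F c -> exists2 g, g \in Gs & nonzero2 (psi g c)) /\
 (forall c, onCurve F c -> forall g g', g \in Gs -> g' \in Gs -> projeq (psi g c) (psi g' c)) /\
 (forall c, onCurve F c -> forall g, g \in Gs -> nonzero2 (psi g c) -> P1minus2 a b (psi g c)) /\
 (forall v, P1minus2 a b v -> forall g, g \in Gs -> nonzero2 (psi g (phiv d A1 A2 Q v)) ->
     projeq (psi g (phiv d A1 A2 Q v)) v) /\
 (forall c, onCurve F c -> forall g, g \in Gs -> nonzero2 (psi g c) -> phiv d A1 A2 Q (psi g c) = c).

Lemma iso_isoC F a b : iso_P1minus2_over_R F a b ->
  exists d A1 A2 Q Gs, isoC F a b d A1 A2 Q Gs.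
Proof.
case=> d [A1 [A2 [Q [H1 [Gs H]]]]]. exists d, A1, A2, Q, Gs. exact: (conj H1 H).
Qed.

Lemma P1minus2_sym (a b v : C * C) : P1minus2 a b v -> P1minus2 b a v.
Proof. by case=> [? [? ?]]. Qed.

Lemma isoC_sym F a b d A1 A2 Q Gs : isoC F a b d A1 A2 Q Gs -> isoC F b a d A1 A2 Q Gs.
Proof.
case=> [H1 [H2 [H3 [H4 [H5 H6]]]]]; split; [|split; [|split; [|split; [|split]]]] => //.
- by move=> v /P1minus2_sym /H1.
- by move=> c hc g hg nz; apply/P1minus2_sym/H4.
- by move=> v /P1minus2_sym /H5.
Qed.

Lemma hh_conj d p v : (hh d p v)^*%C = hh d p (vconj v).
Proof.
rewrite /hh (hom_rmorph conjc) /=; congr Defs.hom.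
rewrite -map_poly_comp; apply: eq_map_poly => x /=; exact: conjc_real.
Qed.

Lemma hom_eval_poly d (p : {poly C}) (s t : {poly C}) e :
  (Defs.hom d (map_poly polyC p) s t).[e] = Defs.hom d p s.[e] t.[e].
Proof.
have -> : (Defs.hom d (map_poly polyC p) s t).[e] = horner_eval e (Defs.hom d (map_poly polyC p) s t) by [].
rewrite hom_rmorph /=; congr Defs.hom.
rewrite -map_poly_comp; apply: map_poly_id => x _ /=; by rewrite /horner_eval hornerC.
Qed.

Lemma ev20 (x y : C) : ev2 (0 : {poly {poly C}}) x y = 0.
Proof. by rewrite /ev2 map_poly0 horner0. Qed.

Lemma hQ_zero F a b d A1 A2 Q Gs : isoC F a b d A1 A2 Q Gs ->
  nonzero2 a -> ~ projeq a b -> hh d Q a = 0.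
Proof.
case=> [H1 [H2 [H3 [H4 [H5 H6]]]]] nza nab.
apply/eqP/negPn/negP => hQa.
case: a nza nab H1 H2 H3 H4 H5 H6 hQa => a1 a2 nza nab H1 H2 H3 H4 H5 H6 hQa.
pose e := if a1 != 0 then ((0 : C), (1 : C)) else ((1 : C), (0 : C)).
have ke : e.1 * a2 - e.2 * a1 != 0.
  rewrite /e; case: (eqVneq a1 0) => [a10|a1n] /=.
    rewrite a10 mulr0 subr0 mul1r. by case: nza => //= ; rewrite a10 eqxx.
  by rewrite mul0r sub0r mul1r oppr_eq0.
pose vpt (t : C) := (a1 + t * e.1, a2 + t * e.2).
pose v1 : {poly C} := a1%:P + 'X * e.1%:P.
pose v2 : {poly C} := a2%:P + 'X * e.2%:P.
have v1e t : v1.[t] = a1 + t * e.1 by rewrite /v1 !hornerE.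
have v2e t : v2.[t] = a2 + t * e.2 by rewrite /v2 !hornerE.
pose hp p := Defs.hom d (map_poly polyC (map_poly (real_complex R) p)) v1 v2.
have hpe p t : (hp p).[t] = hh d p (vpt t) by rewrite /hp hom_eval_poly v1e v2e.
pose kb := e.1 * b.2 - e.2 * b.1.
pose S := [:: 0; - (a1 * b.2 - a2 * b.1) / kb].
have good t : t \notin S -> P1minus2 (a1, a2) b (vpt t).
  rewrite !inE negb_or => /andP [t0 t1].
  have na : ~ projeq (vpt t) (a1, a2).
    rewrite /projeq /vpt /= => h.
    have : t * (e.1 * a2 - e.2 * a1) = 0.
      by rewrite -[X in _ = X](subrr ((a1 + t * e.1) * a2)) {2}h; ring.
    by move/eqP; rewrite mulf_eq0 (negbTE t0) (negbTE ke).
  split; last split => //.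
    rewrite /nonzero2; case: (eqVneq (vpt t).1 0) => h1; last by left.
    case: (eqVneq (vpt t).2 0) => h2; last by right.
    by exfalso; apply: na; rewrite /projeq h1 h2 !mul0r.
  rewrite /projeq /vpt /= => h.
  have h' : (a1 * b.2 - a2 * b.1) + t * kb = 0.
    by rewrite /kb -[X in _ = X](subrr ((a1 + t * e.1) * b.2)) {2}h; ring.
  case: (eqVneq kb 0) => kb0.
    by apply: nab; rewrite /projeq /=; apply/eqP; rewrite -subr_eq0; apply/eqP; rewrite -h' kb0 mulr0 addr0.
  move/negP: t1; apply; apply/eqP.
  apply: (mulIf kb0); rewrite divfK //.
  by apply/eqP; rewrite -addr_eq0 addrC h'.
have vpt0 : vpt 0 = (a1, a2) by rewrite /vpt !mul0r !addr0.
have q00 : (hp Q).[0] != 0 by rewrite hpe vpt0.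
(* the limit point is on the curve *)
have onc : onCurve F (phiv d A1 A2 Q (a1, a2)).
  have := @rat_cont R (hp A1) (hp A2) (hp Q) 1 0 (FC R F) 0 S q00.
  rewrite !hpe vpt0 !hornerE /= ?ev20 ?mulr0 ?mul0r ?addr0 ?mulr1 => h; apply: h => t tS _.
  rewrite !hpe !hornerE ?ev20 ?mulr0 ?mul0r ?addr0 ?mulr1.
  by have [_ ] := H1 _ (good t tS).
have [g gG nzg] := H2 _ onc.
have := @rat_cont R (hp A1) (hp A2) (hp Q) v2 (- v1) g.1 g.2 S q00.
rewrite !hpe vpt0 !hornerE /=.
move=> h.
have [_ [hna _]] := H4 _ onc g gG nzg.
apply: hna; rewrite /projeq /psi /phiv /=.
apply/eqP; rewrite -subr_eq0; apply/eqP; rewrite -[RHS]h; last first.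
  move=> t tS _; rewrite !hpe !hornerE /= -v1e -v2e.
  have hp5 : projeq (psi g (phiv d A1 A2 Q (vpt t))) (vpt t).
    set u := psi g (phiv d A1 A2 Q (vpt t)).
    case: (eqVneq u.1 0) => z1; last by apply: (H5 _ (good t tS) g gG); left.
    case: (eqVneq u.2 0) => z2; last by apply: (H5 _ (good t tS) g gG); right.
    by rewrite /projeq z1 z2 !mul0r.
  move: hp5; rewrite /projeq /psi /phiv /vpt /= v1e v2e => ->; ring.
ring.
Qed.

End A.

Module An.
Import boolp classical_sets topology normedtype derive.
Import numFieldNormedType.Exports.
Local Open Scope classical_set_scope.

Section An.
Variable R : realType.

Lemma poly_sign_root (p : {poly R}) (s s' : R) : p.[s] * p.[s'] <= 0 -> exists t, p.[t] = 0.
Proof.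
wlog le : s s' / s <= s'.
  move=> W h; case: (lerP s s') => h'; first exact: (W s s').
  by apply: (W s' s); [exact: ltW | rewrite mulrC].
move=> h.
have mm : Num.min p.[s] p.[s'] <= 0 <= Num.max p.[s] p.[s'].
  have A : p.[s] <= 0 \/ p.[s'] <= 0.
    by case: (lerP p.[s] 0) => h1; [left | right; nra].
  have B : 0 <= p.[s] \/ 0 <= p.[s'].
    by case: (lerP 0 p.[s]) => h1; [left | right; nra].
  rewrite ge_min le_max; apply/andP; split; apply/orP.
    by case: A; [left | right].
  by case: B; [left | right].
have := @IVT R (horner p) s s' 0 le.
case.
- exact: (continuous_subspaceT (@continuous_horner R p)).
- exact: mm.
move=> t _ ht.
by exists t.
Qed.

Lemma chart_bound (P Qp : {poly R}) :
  (forall u : R, -1 <= u <= 1 -> Qp.[u] != 0) ->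
  exists M : R, 0 <= M /\ forall u : R, -1 <= u <= 1 -> `|P.[u] / Qp.[u]| <= M.
Proof.
move=> HQ.
have le11 : (-1 : R) <= 1 by lra.
have [c c1 hc] := EVT_min le11 (continuous_subspaceT (@continuous_horner R (Qp * Qp))).
have [c' c1' hc'] := EVT_max le11 (continuous_subspaceT (@continuous_horner R (P * P))).
set dl := (Qp * Qp).[c]. set mu := (P * P).[c'].
have inI (u : R) : -1 <= u <= 1 -> u \in `[-1, 1]%R by move=> h; rewrite in_itv /=.
have dl0 : 0 < dl.
  rewrite /dl hornerM.
  have : Qp.[c] != 0 by apply: HQ; move: c1; rewrite in_itv /=.
  move=> h; rewrite lt_def mulf_neq0 //=. by rewrite -expr2 sqr_ge0.
have mu0 : 0 <= mu by rewrite /mu hornerM -expr2 sqr_ge0.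
exists (1 + mu / dl); split; first by rewrite addr_ge0 // divr_ge0 // ltW.
move=> u hu.
have qu : Qp.[u] != 0 by apply: HQ.
have h1 : Qp.[u] ^+ 2 >= dl by rewrite expr2 -hornerM; exact: hc (inI u hu).
have h2 : P.[u] ^+ 2 <= mu by rewrite expr2 -hornerM; exact: hc' (inI u hu).
set z := P.[u] / Qp.[u].
have hz : z ^+ 2 * Qp.[u] ^+ 2 = P.[u] ^+ 2 by rewrite /z expr_div_n divfK // expf_neq0.
have hz2 : z ^+ 2 <= mu / dl.
  rewrite ler_pdivlMr //.
  apply: le_trans h2; rewrite -hz; apply: ler_wpM2l => //; exact: sqr_ge0.
have hz3 : `|z| <= 1 + z ^+ 2.
  case: (lerP 0 z) => hz0; [rewrite ger0_norm // | rewrite ltr0_norm //]; nra.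
lra.
Qed.

End An.

End An.
Import An.


Lemma hom_ratio (K : fieldType) d (p q : {poly K}) l s t : l != 0 ->
  Defs.hom d p (l * s) (l * t) / Defs.hom d q (l * s) (l * t) = Defs.hom d p s t / Defs.hom d q s t.
Proof.
move=> l0; rewrite !hom_scale -mulf_div divff ?mul1r //; exact: expf_neq0.
Qed.

Section B.
Variable R : realType.
Local Notation C := (R[i]).

Lemma hh_real d p (s t : R) : hh d p (s%:C, t%:C)%C = (Defs.hom d p s t)%:C%C.
Proof. by rewrite /hh (hom_rmorph (real_complex R)). Qed.

Lemma phiv_scale d A1 A2 Q (l : C) (v : C * C) : l != 0 ->
  phiv d A1 A2 Q (l * v.1, l * v.2) = phiv d A1 A2 Q v.
Proof. by move=> l0; rewrite /phiv /hh /= !hom_ratio. Qed.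

Lemma phiv_conj d A1 A2 Q (v : C * C) : phiv d A1 A2 Q (vconj v) = vconj (phiv d A1 A2 Q v).
Proof. by rewrite /phiv /vconj /= -!hh_conj !(fmorph_div conjc). Qed.

Lemma vconjK (v : C * C) : vconj (vconj v) = v.
Proof. by case: v => x y; rewrite /vconj /= !conjcK. Qed.

Lemma vconj_real (s t : R) : vconj (s%:C, t%:C)%C = (s%:C, t%:C)%C.
Proof. by rewrite /vconj /= oppr0. Qed.

Lemma realC_eq0 (s : R) : (s%:C%C == 0 :> C) = (s == 0).
Proof. by rewrite eq_complex /= eqxx andbT. Qed.

Definition cp1 d (p : {poly R}) := \poly_(i < d.+1) p`_i.
Definition cp2 d (p : {poly R}) := \poly_(i < d.+1) p`_(d - i).

Lemma cp1E d p u : Defs.hom d p u 1 = (cp1 d p).[u].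
Proof. by rewrite /cp1 horner_poly /Defs.hom; apply: eq_bigr => i _; rewrite expr1n mulr1. Qed.

Lemma cp2E d p u : Defs.hom d p 1 u = (cp2 d p).[u].
Proof.
rewrite /cp2 horner_poly /Defs.hom (reindex_inj rev_ord_inj) /=; apply: eq_bigr => i _.
rewrite expr1n mulr1 subSS.
have -> : (d - (d - i) = i)%N by rewrite subKn // -ltnS.
by [].
Qed.

Lemma proj_bound d (A1 A2 Q : {poly R}) :
  (forall s t : R, s != 0 \/ t != 0 -> Defs.hom d Q s t != 0) ->
  exists M : R, 0 <= M /\ forall s t : R, s != 0 \/ t != 0 ->
    `|Defs.hom d A1 s t / Defs.hom d Q s t| <= M /\ `|Defs.hom d A2 s t / Defs.hom d Q s t| <= M.
Proof.
move=> hQ.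
have q1 u : -1 <= u <= 1 -> (cp1 d Q).[u] != 0 by move=> _; rewrite -cp1E; apply: hQ; right; exact: oner_neq0.
have q2 u : -1 <= u <= 1 -> (cp2 d Q).[u] != 0 by move=> _; rewrite -cp2E; apply: hQ; left; exact: oner_neq0.
have [M1 [M10 hM1]] := chart_bound (cp1 d A1) q1.
have [M2 [M20 hM2]] := chart_bound (cp1 d A2) q1.
have [M3 [M30 hM3]] := chart_bound (cp2 d A1) q2.
have [M4 [M40 hM4]] := chart_bound (cp2 d A2) q2.
exists (M1 + M2 + M3 + M4); split; first by rewrite !addr_ge0.
move=> s t nz.
case: (lerP `|s| `|t|) => hst.
- have t0 : t != 0.
    apply/negP => /eqP t0; move: hst; rewrite t0 normr0 normr_le0 => /eqP s0.
    by case: nz; rewrite ?s0 ?t0 eqxx.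
  have u1 : -1 <= s / t <= 1.
    by rewrite -ler_norml normrM normrV ?unitfE // ler_pdivrMr ?normr_gt0 // mul1r.
  have e p : Defs.hom d p s t = Defs.hom d p (t * (s / t)) (t * 1).
    by rewrite mulr1 mulrC divfK.
  rewrite !e !hom_ratio // !cp1E.
  have := hM1 _ u1; have := hM2 _ u1; split; lra.
- have s0 : s != 0.
    by apply/negP => /eqP s0; move: hst; rewrite s0 normr0 ltNge normr_ge0.
  have u1 : -1 <= t / s <= 1.
    by rewrite -ler_norml normrM normrV ?unitfE // ler_pdivrMr ?normr_gt0 // mul1r ltW.
  have e p : Defs.hom d p s t = Defs.hom d p (s * 1) (s * (t / s)).
    by rewrite mulr1 mulrC divfK.
  rewrite !e !hom_ratio // !cp2E.
  have := hM3 _ u1; have := hM4 _ u1; split; lra.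
Qed.

End B.


Section C6.
Variable R : realType.
Local Notation C := (R[i]).

Lemma polybound (p : {poly R}) n (c : nat -> R) (K x : R) :
  (size p <= n)%N -> (forall i, `|p`_i| <= c i) -> `|x| <= K ->
  `|p.[x]| <= \sum_(i < n) c i * K ^+ i.
Proof.
move=> sp hc hx; rewrite (horner_coef_wide _ sp).
apply: le_trans (ler_norm_sum _ _ _) _; apply: ler_sum => i _.
rewrite normrM normrX; apply: ler_pM => //; first exact: exprn_ge0.
have K0 : 0 <= K by apply: le_trans hx.
by apply: lerXn2r; rewrite // ?qualifE /= ?normr_ge0.
Qed.

Lemma ev2_bound (G : {poly {poly R}}) (K : R) : exists B : R, forall x y : R,
  `|x| <= K -> `|y| <= K -> `|ev2 G x y| <= B.
Proof.
exists (\sum_(j < size G) (\sum_(i < size G`_j) `|G`_j`_i| * K ^+ i) * K ^+ j).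
move=> x y hx hy; rewrite /ev2.
apply: (polybound (c := fun j => \sum_(i < size G`_j) `|G`_j`_i| * K ^+ i)) hy.
  apply/leq_sizeP => j hj; rewrite coef_map_id0 ?horner0 //.
  by rewrite nth_default ?horner0.
move=> j; rewrite coef_map_id0 ?horner0 //.
apply: (polybound (c := fun i => `|G`_j`_i|)) hx => //.
Qed.

Lemma ev2_swap (G : {poly {poly R}}) (t y : R) : ev2 G t y = (G.[y%:P]).[t].
Proof.
have -> : ev2 G t y = (map_poly (horner_eval t) G).[horner_eval t y%:P] by rewrite /horner_eval hornerC.
by rewrite horner_map.
Qed.

Lemma no_far_zero (G : {poly {poly R}}) (M : R) :
  0 <= M ->
  (forall x y, ev2 G x y = 0 -> `|x| <= M /\ `|y| <= M) ->
  forall z1 z2 : R, (M < `|z1| \/ M < `|z2|) ->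
  ev2 G z1 z2 * ev2 G (M + 1) (M + 1) <= 0 -> False.
Proof.
move=> M0 box z1 z2 hz.
set L := M + 1.
have LM : M < `|L| by rewrite ger0_norm /L; lra.
have vert x0 s s' : M < `|x0| -> ev2 G x0 s * ev2 G x0 s' <= 0 -> False.
  move=> hx h.
  have [t ht] := poly_sign_root h.
  have [h1 _] := box _ _ ht. lra.
have horiz y0 s s' : M < `|y0| -> ev2 G s y0 * ev2 G s' y0 <= 0 -> False.
  move=> hy; rewrite !ev2_swap => h.
  have [t ht] := poly_sign_root h.
  rewrite -ev2_swap in ht.
  have [_ h1] := box _ _ ht. lra.
set fLL := ev2 G L L.
case: hz => hz.
- case: (lerP (ev2 G z1 z2 * ev2 G z1 L) 0) => h1 h2.
    exact: (vert z1 z2 L hz h1).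
  apply: (horiz L z1 L LM).
  have : ev2 G z1 z2 ^+ 2 * (ev2 G z1 L * fLL) <= 0.
    have -> : ev2 G z1 z2 ^+ 2 * (ev2 G z1 L * fLL) = (ev2 G z1 z2 * ev2 G z1 L) * (ev2 G z1 z2 * fLL) by ring.
    rewrite pmulr_rle0 //.
  move: h1 h2; set A := ev2 G z1 z2; set Bw := ev2 G z1 L => h1 h2 h3.
  have A0 : A != 0 by apply/negP => /eqP A0; move: h1; rewrite A0 mul0r ltxx.
  have : 0 < A ^+ 2 by rewrite exprn_even_gt0.
  move=> hA; move: h3; rewrite pmulr_rle0 //.
- case: (lerP (ev2 G z1 z2 * ev2 G L z2) 0) => h1 h2.
    exact: (horiz z2 z1 L hz h1).
  apply: (vert L z2 L LM).
  have : ev2 G z1 z2 ^+ 2 * (ev2 G L z2 * fLL) <= 0.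
    have -> : ev2 G z1 z2 ^+ 2 * (ev2 G L z2 * fLL) = (ev2 G z1 z2 * ev2 G L z2) * (ev2 G z1 z2 * fLL) by ring.
    rewrite pmulr_rle0 //.
  move: h1 h2; set A := ev2 G z1 z2; set Bw := ev2 G L z2 => h1 h2 h3.
  have A0 : A != 0 by apply/negP => /eqP A0; move: h1; rewrite A0 mul0r ltxx.
  have : 0 < A ^+ 2 by rewrite exprn_even_gt0.
  move=> hA; move: h3; rewrite pmulr_rle0 //.
Qed.

End C6.


Section C7.
Variable R : realType.
Local Notation C := (R[i]).

Lemma conj_pair F (a b : C * C) d A1 A2 Q Gs : isoC F a b d A1 A2 Q Gs ->
  nonzero2 a -> ~ projeq a b -> ~ real_point a -> projeq (vconj a) b.
Proof.
move=> iso nza nab nra.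
have hq := hQ_zero iso nza nab.
have hqc : hh d Q (vconj a) = 0 by rewrite -hh_conj hq rmorph0.
case: iso => [H1 _].
case: (eqVneq ((vconj a).1 * b.2) ((vconj a).2 * b.1)) => // hb.
exfalso.
have P : P1minus2 a b (vconj a).
  split; first exact: nonzero2_conj.
  split; last by move=> h; rewrite /projeq h eqxx in hb.
  move=> h; apply: nra; apply: real_of_selfconj nza _; exact: projeq_sym h.
have [hne _] := H1 _ P.
by rewrite hqc eqxx in hne.
Qed.

Lemma conj_pair_false F (a b : C * C) d A1 A2 Q Gs :
  (forall r : R, exists x y : R, ev2 (FR R F) x y = r) ->
  isoC F a b d A1 A2 Q Gs -> nonzero2 a -> nonzero2 b -> projeq (vconj a) b ->
  ~ real_point a -> False.
Proof.
move=> surj [H1 [H2 [H3 [H4 [H5 H6]]]]] nza nzb hab nra.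
have nrA (w : C * C) : projeq w a -> nonzero2 w -> vconj w = w -> False.
  move=> pw nzw wr; apply: nra; apply: real_of_selfconj nza _.
  have h2 : projeq w (vconj a) by have := projeq_conj pw; rewrite wr.
  exact: projeq_trans nzw (projeq_sym pw) h2.
have nrB (w : C * C) : projeq w b -> nonzero2 w -> vconj w = w -> False.
  move=> pw nzw wr; apply: (nrA w) => //.
  have h : projeq w (vconj a) := projeq_trans nzb pw (projeq_sym hab).
  by have := projeq_conj h; rewrite wr vconjK.
have realP (s t : R) : s != 0 \/ t != 0 -> P1minus2 a b (s%:C, t%:C)%C.
  move=> nz.
  have nzw : nonzero2 (s%:C, t%:C)%C by rewrite /nonzero2 /= !realC_eq0.
  split => //; split => h.
    exact: (nrA _ h nzw (vconj_real s t)).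
  exact: (nrB _ h nzw (vconj_real s t)).
have hQr (s t : R) : s != 0 \/ t != 0 -> Defs.hom d Q s t != 0.
  move=> nz; have [h _] := H1 _ (realP s t nz).
  by move: h; rewrite hh_real realC_eq0.
have curve (x y : R) : ev2 (FR R F) x y = 0 -> exists s t : R, (s != 0 \/ t != 0) /\
    phiv d A1 A2 Q (s%:C, t%:C)%C = (x%:C, y%:C)%C.
  move=> h0.
  have onc : onCurve F (x%:C, y%:C)%C by apply/onCurve_real.
  have [g gG nz] := H2 _ onc.
  have Pw := H4 _ onc g gG nz.
  have pw := H6 _ onc g gG nz.
  case: Pw => nzw [nwa nwb].
  have Pcw : P1minus2 a b (vconj (psi g (x%:C, y%:C)%C)).
    split; first exact: nonzero2_conj.
    split => h.
    - apply: nwb. have h' := projeq_conj h. rewrite vconjK in h'.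
      exact: projeq_trans (nonzero2_conj nza) h' hab.
    - apply: nwa. have h1 := projeq_trans nzb h (projeq_sym hab).
      by have := projeq_conj h1; rewrite !vconjK.
  have pc : phiv d A1 A2 Q (vconj (psi g (x%:C, y%:C)%C)) = (x%:C, y%:C)%C.
    by rewrite phiv_conj pw vconj_real.
  have hw : projeq (psi g (x%:C, y%:C)%C) (vconj (psi g (x%:C, y%:C)%C)).
    by have := H5 _ Pcw g gG; rewrite pc; apply.
  have [l [l0 [s [t [e1 e2]]]]] := real_of_selfconj nzw hw.
  exists s, t; split.
    case: (eqVneq s 0) => s0; last by left.
    case: (eqVneq t 0) => t0; last by right.
    exfalso; move: e1 e2; rewrite s0 t0 => /eqP e1 /eqP e2.
    have z : (0 : R)%:C%C = 0 :> C by [].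
    rewrite z mulf_eq0 (negbTE l0) /= in e1.
    rewrite z mulf_eq0 (negbTE l0) /= in e2.
    by case: nzw => /negP h; apply: h; first [exact: e1 | exact: e2].
  have -> : (s%:C, t%:C)%C = (l * (psi g (x%:C, y%:C)%C).1, l * (psi g (x%:C, y%:C)%C).2).
    by rewrite e1 e2.
  by rewrite phiv_scale.
have [M [M0 hM]] := proj_bound A1 A2 hQr.
have box (x y : R) : ev2 (FR R F) x y = 0 -> `|x| <= M /\ `|y| <= M.
  move=> h0; have [s [t [nz e]]] := curve x y h0.
  have [b1 b2] := hM s t nz.
  have ex : x = Defs.hom d A1 s t / Defs.hom d Q s t.
    apply: (@complexI R); have := congr1 fst e; rewrite /phiv /= !hh_real => <-.
    by rewrite fmorph_div.
  have ey : y = Defs.hom d A2 s t / Defs.hom d Q s t.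
    apply: (@complexI R); have := congr1 snd e; rewrite /phiv /= !hh_real => <-.
    by rewrite fmorph_div.
  by rewrite ex ey.
have [B hB] := ev2_bound (FR R F) M.
have far (z1 z2 : R) : `|B| + 1 <= `|ev2 (FR R F) z1 z2| -> M < `|z1| \/ M < `|z2|.
  move=> h; case: (lerP `|z1| M) => h1; last by left.
  case: (lerP `|z2| M) => h2; last by right.
  exfalso; have h3 := hB _ _ h1 h2; have h4 := ler_norm B.
  have := le_trans h (le_trans h3 h4). by rewrite -{2}(addr0 `|B|) lerD2l ler10.
have [p1 [p2 hp]] := surj (`|B| + 1).
have [q1 [q2 hq]] := surj (- (`|B| + 1)).
have nf := no_far_zero M0 box.
have nB := normr_ge0 B.
have pos : 0 <= `|B| + 1 := addr_ge0 nB ler01.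
case: (lerP (ev2 (FR R F) (M + 1) (M + 1)) 0) => hL.
- apply: (nf p1 p2).
    by apply: far; rewrite hp (ger0_norm pos).
  by rewrite hp; apply: mulr_ge0_le0.
- apply: (nf q1 q2).
    by apply: far; rewrite hq normrN (ger0_norm pos).
  by rewrite hq mulNr oppr_le0 mulr_ge0 // ltW.
Qed.

End C7.

Theorem mainTheorem13 (R : realType) (F : {poly {poly rat}})
  (a b : R[i] * R[i]) :
  (* F(R x R) = R *)
  (forall r : R, exists x y : R, ev2 (FR R F) x y = r) ->
  (* F(Z x Z) contains N *)
  (forall n : nat, exists x y : int, ev2 F x%:~R y%:~R = n%:R) ->
  (* C = {F = 0} is smooth and isomorphic over Qbar to A^1_* *)
  smooth_curve R F ->
  iso_Gm_over_Qbar R F ->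
  (* a, b two distinct points of P^1(C) and phi : P^1\{a,b} -> C an iso *)
  nonzero2 a -> nonzero2 b -> ~ projeq a b ->
  iso_P1minus2_over_R F a b ->
  real_point a /\ real_point b.
Proof.
move=> surj _ _ _ nza nzb nab iso.
have [d [A1 [A2 [Q [Gs isc]]]]] := iso_isoC iso.
have iscs := isoC_sym isc.
have nba : ~ projeq b a by move/projeq_sym.
case: (classic (real_point a)) => ra; last first.
  exfalso; exact: (conj_pair_false surj isc nza nzb (conj_pair isc nza nab ra) ra).
case: (classic (real_point b)) => rb; first by split.
exfalso; exact: (conj_pair_false surj iscs nzb nza (conj_pair iscs nzb nba rb) rb).
Qed.
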